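(* Let $n\ge 1$ and consider any sequence of legal moves starting from $\{F_1^n\}$ that uses only splitting moves and $C_1$ moves. Then in every game state reached, if $i<j$ are indices such that $F_i$ and $F_j$ both occur in the state and no $F_l$ with $i<l<j$ occurs, then $j-i\le 3$.
   Context: Fibonacci numbers are indexed by $F_1=1$, $F_2=2$, $F_{i+1}=F_i+F_{i-1}$. A game state is a finite multiset of Fibonacci numbers (tracked by index); $\{F_1^n\}$ denotes $n$ copies of $F_1$. The moves considered are: $C_1$: replace $F_1,F_1$ by $F_2$; $S_2$: replace $F_2,F_2$ by $F_1,F_3$; for $i\ge 3$, $S_i$: replace $F_i,F_i$ by $F_{i-2},F_{i+1}$ (the ''splitting moves''); each requires the two replaced elements to be present in the state. *)

(* Defs.v *)
From mathcomp Require Import all_boot.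
Set Implicit Arguments. Unset Strict Implicit. Unset Printing Implicit Defensive.

(* A game state is a finite multiset of Fibonacci numbers, tracked by index:
   [s i] is the multiplicity of F_i in the state (F_1 = 1, F_2 = 2, ...).
   Index 0 is unused. *)
Definition state := nat -> nat.

Definition init_state (n : nat) : state := fun k => if k == 1 then n else 0.

Definition add1 (s : state) (i : nat) : state :=
  fun k => if k == i then (s k).+1 else s k.
Definition sub2 (s : state) (i : nat) : state :=
  fun k => if k == i then s k - 2 else s k.

Inductive split_or_C1_move : state -> state -> Prop :=
| move_C1 (s : state) : 2 <= s 1 ->
    split_or_C1_move s (add1 (sub2 s 1) 2)
| move_S2 (s : state) : 2 <= s 2 ->
    split_or_C1_move s (add1 (add1 (sub2 s 2) 1) 3)
| move_S (i : nat) (s : state) : 3 <= i -> 2 <= s i ->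
    split_or_C1_move s (add1 (add1 (sub2 s i) (i - 2)) (i + 1)).

Inductive reachable (n : nat) : state -> Prop :=
| reach_init : reachable n (init_state n)
| reach_step (s t : state) : reachable n s -> split_or_C1_move s t -> reachable n t.

(* Main.v *)
Require Import Defs.
From mathcomp Require Import all_boot.
From mathcomp Require Import zify.

Definition R (s : state) : Prop :=
  forall i j, 0 < s i -> 0 < s j -> i < j -> exists l, i < l /\ l <= i + 3 /\ 0 < s l.

Lemma move_facts s t : split_or_C1_move s t ->
  exists k, [/\ 2 <= s k, 0 < t k.+1, (forall x, x != k -> s x <= t x),
     (forall x, 0 < t x -> 0 < s x \/ (k - 2 <= x /\ x <= k + 1)) &
     (3 <= k -> 0 < t (k - 2))].
Proof.
case=> [s0 H|s0 H|i s0 Hi H]; [exists 1|exists 2|exists i];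
  split; rewrite /add1 /sub2 => //; try move=> x;
  repeat (case: eqP => [?|?]; subst => //=); try lia.
Qed.

Lemma R_step s t : R s -> split_or_C1_move s t -> R t.
Proof.
move=> Rs /move_facts [k [Hk Htk Hle Hsupp Hlow]] i j ti tj ij.
have tpos : forall x, x != k -> 0 < s x -> 0 < t x.
  by move=> x /Hle; lia.
case: (leqP (k - 2) i) => Hi1; case: (leqP i k) => Hi2.
- exists k.+1; do !split; lia.
-
  case: (Hsupp i ti) => [si|Hb].
  + case: (Hsupp j tj) => [sj|Hb2]; last lia.
    have [l [? [? ?]]] := Rs i j si sj ij.
    exists l; do !split; try lia; apply: tpos => //; apply/eqP; lia.
  + have ei : i = k.+1 by lia.
    case: (Hsupp j tj) => [sj|Hb2]; last lia.
    have [l [? [? sl]]] := Rs k j (ltac:(lia)) sj (ltac:(lia)).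
    case: (l =P k.+1) => [el|nl].
    * subst l. have [l' [? [? ?]]] := Rs k.+1 j sl sj (ltac:(lia)).
      exists l'; do !split; try lia; apply: tpos => //; apply/eqP; lia.
    * exists l; do !split; try lia; apply: tpos => //; apply/eqP; lia.
-
  case: (Hsupp i ti) => [si|Hb]; last lia.
  have [j' [sj' ij']] : exists j', 0 < s j' /\ i < j'.
    case: (Hsupp j tj) => [sj|Hb2]; first by exists j.
    by exists k; split; lia.
  have [l [? [? sl]]] := Rs i j' si sj' ij'.
  case: (l =P k) => [el|nl].
  + exists (k - 2); do !split; try lia; apply: Hlow; lia.
  + exists l; do !split; try lia; apply: tpos => //; exact/eqP.
- lia.
Qed.

Lemma R_reach n s : reachable n s -> R s.
Proof.
elim=> [|s0 t _ IH Hm]; last exact: R_step IH Hm.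
move=> i j; rewrite /init_state; case: (i =P 1); case: (j =P 1) => //; lia.
Qed.

Theorem mainTheorem11 (n : nat) (s : state) (i j : nat) :
  1 <= n -> reachable n s ->
  i < j -> 0 < s i -> 0 < s j ->
  (forall l, i < l -> l < j -> s l = 0) ->
  j - i <= 3.
Proof.
move=> _ /R_reach Rs ij si sj gap.
have [l [? [? sl]]] := Rs i j si sj ij.
case: (ltnP l j) => H; last lia.
by move: (gap l (ltac:(lia)) H); lia.
Qed.
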